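(* Consider the Probabilistic Serial mechanism with $n$ agents and $m \le n$ items. Agent 1 has a strict linear order $\succ_1$ over the items; let $\overline{O}$ be the set of its $k$ most preferred items under $\succ_1$ ($1 \le k \le m$). Fix arbitrary reported strict linear orders of agents $2,\dots,n$, and consider the truthful run in which agent 1 reports $\succ_1$. Let $T$ be the time at which the last item of $\overline{O}$ is exhausted in this run, and suppose $\tfrac12 \le T < \tfrac23$. Suppose there is an item $o^* \in \overline{O}$ of which agent 1 receives a positive amount such that, at the moment $o^*$ is exhausted, the agents eating $o^*$ are exactly agent 1 and one other agent, called agent 2. Let $t_1$ be the time at which agent 1 starts eating $o^*$ and $t_1+t_2$ the time at which $o^*$ is exhausted, and let $O_3$ be the set of items exhausted during the time interval $(t_1+t_2, T]$ in the truthful run. Then for every item in $O_3$, at the moment it is exhausted in the truthful run, there are at least two agents other than agents 1 and 2 eating it.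
   Context: Probabilistic Serial: there are $n$ agents and $m$ divisible items of unit supply; each agent reports a strict linear order over all items. Starting at time $0$, every agent consumes at rate $1$ per unit time its most preferred item (according to its report) among those with positive remaining supply; when an item is exhausted, agents consuming it move to their most preferred item still available; this continues until all items are exhausted. *)

(* Defs.v *)
From HB Require Import structures.
From mathcomp Require Import all_boot all_order all_algebra all_fingroup.
Set Implicit Arguments. Unset Strict Implicit. Unset Printing Implicit Defensive.
Import Order.TTheory GRing.Theory Num.Theory.
Local Open Scope ring_scope.

(* A strict linear order over items is given by a ranking
   permutation [rk : {perm 'I_m}]: item j is the (rk j)-th most preferred
   (rank 0 = best), so j' is preferred to j iff rk j' < rk j.

   A run of the eating process is described by its exhaustion times
   [e : 'I_m -> R] (e j = time at which item j is exhausted).  At time t,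
   agent i eats its most preferred item among those not yet exhausted,
   i.e. among {j | t < e j}.  Hence agent i eats item j exactly during the
   time interval [start e (rk_i) j, e j) (empty if start >= e j), where
   start is the latest exhaustion time of items i strictly prefers to j
   (or 0). *)

Section PS.
Variables (R : realFieldType) (n m : nat).

Definition start (e : 'I_m -> R) (rk : {perm 'I_m}) (j : 'I_m) : R :=
  \big[Num.max/0]_(j' | (rk j' < rk j)%N) e j'.

Definition amount (e : 'I_m -> R) (rk : {perm 'I_m}) (j : 'I_m) : R :=
  Num.max 0 (e j - start e rk j).

(* e is the vector of exhaustion times of the PS run under profile pref:
   every item (of unit supply) is consumed exactly when it is exhausted *)
Definition PS_run (pref : 'I_n -> {perm 'I_m}) (e : 'I_m -> R) : Prop :=
  forall j : 'I_m, \sum_(i < n) amount e (pref i) j = 1.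

Definition eating_at_exhaustion (pref : 'I_n -> {perm 'I_m}) (e : 'I_m -> R)
    (i : 'I_n) (j : 'I_m) : bool :=
  start e (pref i) j < e j.

End PS.

(* Main.v *)
Require Import Defs.
From HB Require Import structures.
From mathcomp Require Import all_boot all_order all_algebra all_fingroup.
From mathcomp Require Import lra.
Import Order.TTheory GRing.Theory Num.Theory.
Local Open Scope ring_scope.

Section Aux.
Variables (R : realFieldType) (m : nat).

Lemma start_ge0 (e : 'I_m -> R) rk j : 0 <= start e rk j.
Proof. exact: bigmax_ge_id. Qed.

Lemma start_ge (e : 'I_m -> R) (rk : {perm 'I_m}) j j' :
  (rk j' < rk j)%N -> e j' <= start e rk j.
Proof. by move=> h; rewrite /start; apply: (le_bigmax_cond _ _ h). Qed.

Lemma amount_le (e : 'I_m -> R) rk j s0 :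
  s0 <= start e rk j -> amount e rk j <= Num.max 0 (e j - s0).
Proof.
move=> h; rewrite /amount; apply: le_max2 => //; by rewrite lerD2l lerN2.
Qed.

Lemma amount_noeat (e : 'I_m -> R) rk j :
  ~~ (start e rk j < e j) -> amount e rk j = 0.
Proof.
rewrite -leNgt => h; rewrite /amount; apply/max_idPl; by rewrite subr_le0.
Qed.

Lemma amount_pos (e : 'I_m -> R) rk j : 0 < amount e rk j -> start e rk j < e j.
Proof. by rewrite /amount lt_max ltxx /= subr_gt0. Qed.

Lemma before (e : 'I_m -> R) (rk : {perm 'I_m}) o j :
  start e rk o < e o -> e o < e j -> e o <= start e rk j.
Proof.
move=> h1 h2; case: (ltngtP (rk o) (rk j)) => h.
- exact: start_ge.
- have h3 := start_ge e _ _ _ h.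
  have := lt_trans (le_lt_trans h3 h1) h2; by rewrite ltxx.
- move/val_inj/perm_inj: h => h; by rewrite h ltxx in h2.
Qed.

Lemma amount_le2 (e : 'I_m -> R) rk j s0 :
  s0 <= start e rk j -> 0 <= e j - s0 -> amount e rk j <= e j - s0.
Proof.
move=> h1 h2; apply: le_trans (amount_le _ _ _ _ h1) _; by rewrite ge_max lexx h2.
Qed.

End Aux.
Arguments start_ge0 {R m}.
Arguments start_ge {R m e rk j j'}.
Arguments amount_le {R m e rk j s0}.
Arguments amount_noeat {R m e rk j}.
Arguments amount_pos {R m e rk j}.
Arguments before {R m e rk o j}.
Arguments amount_le2 {R m e rk j s0}.

Theorem lemma4 (R : realFieldType) (n m k : nat)
    (pref : 'I_n -> {perm 'I_m}) (a1 a2 : 'I_n) (e : 'I_m -> R) (ostar : 'I_m) :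
  (m <= n)%N -> (0 < k)%N -> (k <= m)%N -> a1 != a2 ->
  PS_run pref e ->
  let Obar := [set j : 'I_m | (pref a1 j < k)%N] in
  let T := \big[Num.max/0]_(j in Obar) e j in
  1 / 2 <= T -> T < 2 / 3 ->
  ostar \in Obar ->
  0 < amount e (pref a1) ostar ->
  [set i | eating_at_exhaustion pref e i ostar] = [set a1; a2] ->
  let t1 := start e (pref a1) ostar in
  let t1_plus_t2 := e ostar in
  let O3 := [set j : 'I_m | (t1_plus_t2 < e j) && (e j <= T)] in
  forall j, j \in O3 ->
    (2 <= #|[set i | eating_at_exhaustion pref e i j & (i != a1) && (i != a2)]|)%N.
Proof.
move=> _ _ _ a12 PS Obar T _ HT _ am1 Heat t1 t12 O3 j.
rewrite inE /t12 => /andP[ltoj lejT].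
have eatE i : eating_at_exhaustion pref e i ostar = (i == a1) || (i == a2).
  have : (i \in [set i | eating_at_exhaustion pref e i ostar]) = (i \in [set a1; a2]) by rewrite Heat.
  by rewrite !inE.
have eo0 : 0 <= e ostar.
  have : eating_at_exhaustion pref e a1 ostar by rewrite eatE eqxx.
  rewrite /eating_at_exhaustion => h; apply: ltW; exact: le_lt_trans (start_ge0 _ _ _) h.
have eo : 1 <= e ostar *+ 2.
  rewrite -(PS ostar).
  have -> : e ostar *+ 2 = \sum_(i < n) ((if i == a1 then e ostar else 0)
                                   + (if i == a2 then e ostar else 0)).
    rewrite big_split /= -!big_mkcond /= !big_pred1_eq mulr2n //.
  apply: ler_sum => i _.
  have := eatE i; rewrite /eating_at_exhaustion.
  case: (start e (pref i) ostar < e ostar) / boolP => h.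
    have hi : 0 <= start e (pref i) ostar := start_ge0 _ _ _.
    have ha : amount e (pref i) ostar <= e ostar.
      by rewrite /amount ge_max eo0 /= lerBlDr lerDl.
    have [Ei|n1] := eqVneq i a1.
      by subst i; rewrite (negPf a12) addr0 => _.
    have [Ei|n2] := eqVneq i a2; first by subst i; rewrite add0r => _.
    by move=> /= H; discriminate H.
  have [Ei|n1] := eqVneq i a1; first by move=> /= H; discriminate H.
  have [Ei|n2] := eqVneq i a2; first by move=> /= H; discriminate H.
  by rewrite (amount_noeat h) addr0.
rewrite ltnNge; apply/negP => hS.
set S := [set i | _ & _] in hS.
have ej0 : 0 <= e j by apply: ltW; exact: le_lt_trans eo0 ltoj.
set c := e j - e ostar.
have c0 : 0 <= c by rewrite subr_ge0 ltW.
have st1 : start e (pref a1) ostar < e ostar := amount_pos am1.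
have st2 : start e (pref a2) ostar < e ostar.
  by have := eatE a2; rewrite eqxx orbT.
have key : 1 <= e j *+ #|S| + c + c.
  rewrite -(PS j).
  have -> : e j *+ #|S| + c + c = \sum_(i < n) ((if i \in S then e j else 0)
       + (if i == a1 then c else 0) + (if i == a2 then c else 0)).
    rewrite !big_split /= -!big_mkcond /= !big_pred1_eq sumr_const //.
  apply: ler_sum => i _.
  case: (boolP (eating_at_exhaustion pref e i j)) => h; last first.
    rewrite (amount_noeat h).
    by rewrite !addr_ge0 //; case: ifP => _ //.
  have [Ei|n1] := eqVneq i a1.
    subst i; rewrite (negPf a12) addr0.
    have -> : (a1 \in S) = false by rewrite inE eqxx !andbF.
    by rewrite add0r; apply: amount_le2 => //; exact: before st1 ltoj.
  have [Ei|n2] := eqVneq i a2.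
    subst i.
    have -> : (a2 \in S) = false by rewrite inE eqxx !andbF.
    by rewrite !add0r; apply: amount_le2 => //; exact: before st2 ltoj.
  have -> : i \in S by rewrite inE h n1 n2.
  rewrite !addr0; have := amount_le2 (start_ge0 e (pref i) j).
  by rewrite subr0; apply.
have : e j *+ #|S| <= e j.
  by case: #|S| hS => [|[|//]] _; rewrite ?mulr0n ?mulr1n.
rewrite /c in key; move: HT lejT key eo => HT' lejT' key' eo'.
lra.
Qed.
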